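(* Let $X,Y\subseteq\mathbb{R}^n$, let $\xi\in\mathbb{R}\setminus\{0\}$ and let $A$ be an invertible $n\times n$ matrix. The cost $c(x,y)=|x|^2|y|^2+\xi\langle Ax,y\rangle$ satisfies the $2$-twist condition: for every $(x_0,y_0)\in X\times Y$ the set $L(x_0,y_0)=\{y\in Y:D_xc(x_0,y)=D_xc(x_0,y_0)\}$ has at most two elements.
   Context: $|\cdot|$ and $\langle\cdot,\cdot\rangle$ are the Euclidean norm and inner product on $\mathbb{R}^n$; $D_xc$ denotes the gradient of $c$ in the variable $x$. *)

(* Defs.v *)
From HB Require Import structures.
From mathcomp Require Import all_boot all_order all_algebra.
From mathcomp Require Import all_classical all_reals all_analysis.
Set Implicit Arguments. Unset Strict Implicit. Unset Printing Implicit Defensive.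
Import Order.TTheory GRing.Theory Num.Theory.
Import numFieldNormedType.Exports.
Local Open Scope classical_set_scope.
Local Open Scope ring_scope.

Definition dotv {R : realType} {n : nat} (u v : 'cV[R]_n) : R :=
  \sum_(i < n) u i 0 * v i 0.

Definition sqnorm {R : realType} {n : nat} (u : 'cV[R]_n) : R := dotv u u.

Definition cost {R : realType} {n : nat} (xi : R) (A : 'M[R]_n)
  (x y : 'cV[R]_n) : R :=
  sqnorm x * sqnorm y + xi * dotv (A *m x) y.

Definition gradx {R : realType} {n : nat} (c : 'cV[R]_n -> 'cV[R]_n -> R)
  (x y : 'cV[R]_n) : 'cV[R]_n :=
  \col_(i < n) ('D_(delta_mx i 0) (fun z => c z y) x).

Definition Lset {R : realType} {n : nat} (c : 'cV[R]_n -> 'cV[R]_n -> R)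
  (Y : set 'cV[R]_n) (x0 y0 : 'cV[R]_n) : set 'cV[R]_n :=
  [set y | Y y /\ gradx c x0 y = gradx c x0 y0].

Definition at_most_two {T : Type} (S : set T) : Prop :=
  exists a b : T, S `<=` [set a; b].

Definition two_twist {R : realType} {n : nat} (c : 'cV[R]_n -> 'cV[R]_n -> R)
  (X Y : set 'cV[R]_n) : Prop :=
  forall x0 y0, X x0 -> Y y0 -> at_most_two (Lset c Y x0 y0).

(* Main.v *)
Require Import Defs.
From HB Require Import structures.
From mathcomp Require Import all_boot all_order all_algebra.
From mathcomp Require Import all_classical all_reals all_analysis.
From mathcomp Require Import ring lra.
Import Order.TTheory GRing.Theory Num.Theory.
Import numFieldNormedType.Exports.
Local Open Scope classical_set_scope.
Local Open Scope ring_scope.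

Section S.
Variable R : realType.

Lemma lim_affine (a b : R) (g : R -> R) :
  (forall h, h != 0 -> g h = a + h * b) -> lim (g @ 0^') = a.
Proof.
move=> Hg.
have H1 : (fun h : R => a + h * b) @ 0^' --> a.
  have Hc : (fun h : R => a + h * b) @ (0:R) --> a + 0 * b.
    apply: cvgD; first exact: cvg_cst.
    apply: cvgM; [exact: cvg_id | exact: cvg_cst].
  rewrite mul0r addr0 in Hc.
  exact: cvg_within_filter Hc.
apply: cvg_lim => //.
apply: cvg_trans H1.
apply: near_eq_cvg.
rewrite near_withinE; near=> h => hn0.
by rewrite Hg.
Unshelve. all: by end_near.
Qed.

Variable n : nat.
Implicit Types u v w : 'cV[R]_n.

Lemma dotvE u v : dotv u v = (u^T *m v) 0 0.
Proof. by rewrite /dotv mxE; apply: eq_bigr => i _; rewrite mxE. Qed.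
Lemma dotvC u v : dotv u v = dotv v u.
Proof. by apply: eq_bigr => i _; rewrite mulrC. Qed.
Lemma dotvDl u v w : dotv (u + v) w = dotv u w + dotv v w.
Proof. by rewrite /dotv -big_split; apply: eq_bigr => i _; rewrite mxE mulrDl. Qed.
Lemma dotvZl a u w : dotv (a *: u) w = a * dotv u w.
Proof. by rewrite /dotv mulr_sumr; apply: eq_bigr => i _; rewrite mxE mulrA. Qed.
Lemma dotvDr u v w : dotv w (u + v) = dotv w u + dotv w v.
Proof. by rewrite dotvC dotvDl !(dotvC w). Qed.
Lemma dotvZr a u w : dotv w (a *: u) = a * dotv w u.
Proof. by rewrite dotvC dotvZl dotvC. Qed.
Lemma dotv_mul (M : 'M[R]_n) u v : dotv (M *m u) v = dotv u (M^T *m v).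
Proof. by rewrite !dotvE trmx_mul mulmxA. Qed.
Lemma dotv_delta u i : dotv u (delta_mx i 0) = u i 0.
Proof. by rewrite dotvE -colE !mxE. Qed.

Lemma derive_affine (f : 'cV[R]_n -> R) x v (a b : R) :
  (forall h : R, h != 0 -> h^-1 * (f (h *: v + x) - f x) = a + h * b) ->
  'D_v f x = a.
Proof.
move=> Hg; rewrite /derive.
have H1 : (fun h : R => a + h * b) @ 0^' --> a.
  have Hc : (fun h : R => a + h * b) @ (0:R) --> a + 0 * b.
    apply: cvgD; first exact: cvg_cst.
    apply: cvgM; [exact: cvg_id | exact: cvg_cst].
  rewrite mul0r addr0 in Hc.
  exact: cvg_within_filter Hc.
apply: cvg_lim => //.
apply: cvg_trans H1.
apply: near_eq_cvg.
rewrite near_withinE; near=> h => hn0.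
by rewrite /= -Hg.
Unshelve. all: by end_near.
Qed.

Lemma gradx_cost xi (A : 'M[R]_n) x y :
  gradx (cost xi A) x y = (2 * sqnorm y) *: x + xi *: (A^T *m y).
Proof.
apply/matrixP => i j; rewrite (ord1 j) mxE [RHS]mxE [in RHS]mxE [X in _ = _ + X]mxE.
apply: (@derive_affine _ _ _ _ (sqnorm (delta_mx i 0 : 'cV[R]_n) * sqnorm y)).
move=> h hn0 /=.
rewrite /cost /sqnorm mulmxDr -scalemxAr !(dotvDl, dotvDr, dotvZl, dotvZr).
rewrite !dotv_mul !(dotvC _ (A^T *m y)) !dotv_delta (dotvC (delta_mx i 0) x) dotv_delta.
by field.
Qed.

Lemma sqnorm0 w : sqnorm w = 0 -> w = 0.
Proof.
move=> H; apply/matrixP => i j; rewrite (ord1 j) mxE.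
have H0 : forall k : 'I_n, xpredT k -> 0 <= w k 0 * w k 0.
  by move=> k _; rewrite -expr2 sqr_ge0.
have := @psumr_eq0P _ _ xpredT (fun k : 'I_n => w k 0 * w k 0) H0 H i isT.
by move=> /eqP; rewrite mulf_eq0 orbb => /eqP.
Qed.

Lemma inj_unit (M : 'M[R]_n) (z : 'cV[R]_n) : M \in unitmx -> M *m z = 0 -> z = 0.
Proof. by move=> Mu Hz; rewrite -(mulKmx Mu z) Hz mulmx0. Qed.

Lemma key xi (A : 'M[R]_n) x0 y0 y : xi != 0 -> A \in unitmx ->
  gradx (cost xi A) x0 y = gradx (cost xi A) x0 y0 ->
  y = y0 + (sqnorm y0 - sqnorm y) *: ((2 / xi) *: (invmx A^T *m x0)).
Proof.
move=> xi0 Au; rewrite !gradx_cost => Hg.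
have Atu : A^T \in unitmx by rewrite unitmx_tr.
apply/eqP; rewrite -subr_eq0; apply/eqP. apply: (@inj_unit (A^T) _ Atu).
rewrite mulmxBr mulmxDr -!scalemxAr (mulKVmx Atu).
apply/matrixP => k j; rewrite (ord1 j) !mxE.
have := congr1 (fun M : 'cV[R]_n => M k 0) Hg; rewrite /= !mxE => Hk.
move: Hk.
set S1 := \sum_(j0 < n) A^T k j0 * y j0 0.
set S2 := \sum_(j0 < n) A^T k j0 * y0 j0 0.
move=> Hk; apply/eqP; rewrite subr_eq0; apply/eqP.
apply: (mulfI xi0).
have E : xi * ((sqnorm y0 - sqnorm y) * (2 / xi * x0 k 0)) =
   2 * sqnorm y0 * x0 k 0 - 2 * sqnorm y * x0 k 0 by field.
rewrite mulrDr E.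
lra.
Qed.
End S.

Theorem mainTheorem15 (R : realType) (n : nat) (X Y : set 'cV[R]_n)
  (xi : R) (A : 'M[R]_n) :
  xi != 0 -> A \in unitmx -> two_twist (cost xi A) X Y.
Proof.
move=> xi0 Au x0 y0 Xx0 Yy0.
set w := (2 / xi) *: (invmx A^T *m x0).
have Hy : forall y, Lset (cost xi A) Y x0 y0 y ->
    y = y0 + (sqnorm y0 - sqnorm y) *: w.
  by move=> y [_ Hg]; exact: key.
clearbody w.
set d := dotv y0 w.
set q := sqnorm w.
have Ht : forall y, Lset (cost xi A) Y x0 y0 y ->
    (sqnorm y0 - sqnorm y) * (1 + 2 * d + (sqnorm y0 - sqnorm y) * q) = 0.
  move=> y Ly.
  set t := sqnorm y0 - sqnorm y.
  have Es : sqnorm y = sqnorm y0 + 2 * t * d + t ^+ 2 * q.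
    have -> : sqnorm y = sqnorm (y0 + t *: w) by rewrite {1}(Hy y Ly).
    rewrite /sqnorm !(dotvDl, dotvDr, dotvZl, dotvZr) (@dotvC _ _ w y0) -/d -/q.
    rewrite -[dotv w w]/q; ring.
  have -> : t * (1 + 2 * d + t * q) =
    (sqnorm y0 + 2 * t * d + t ^+ 2 * q) - sqnorm y by rewrite /t; ring.
  by rewrite -Es subrr.
have [q0|q0] := eqVneq q 0.
  have w0 : w = 0 by exact: sqnorm0.
  exists y0, y0 => y Ly; left.
  by rewrite (Hy y Ly) w0 scaler0 addr0.
exists y0, (y0 + (- (1 + 2 * d) / q) *: w) => y Ly.
have := Ht y Ly; move/eqP; rewrite mulf_eq0 => /orP [/eqP t0 | /eqP h].
  by left; rewrite (Hy y Ly) t0 scale0r addr0.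
right; rewrite /set1 /=; rewrite [LHS](Hy y Ly); congr (_ + _ *: _).
have -> : - (1 + 2 * d) = (sqnorm y0 - sqnorm y) * q by lra.
by rewrite mulfK.
Qed.
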